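(* In the two-parallel-path setting with the linear decision rule, suppose $l_v=0$ for all vertices, $m<n$, all initial pheromone levels are positive, $f_s(t)=f_s(0)+\alpha t$ and $b_d(t)=b_d(0)+\alpha t$ with $\alpha>0$ and $f_s(0),b_d(0)>0$, and the initial flows at vertices other than $s,d$ satisfy $f_v(0)\le f_s(0)$, $b_v(0)\le b_d(0)$. Let $T_1=\max_{(u,v)\in E}\log(p_{uv}(0)/(f_s(0)+b_d(0)))/\log(1/\delta)$. Then for every integer $t\ge L+\max(0,T_1)$, $$r_{\min}(t+L)\ \ge\ \left(1+\frac{\alpha(1-\delta)}{6\,(f_s(0)+b_d(0)+2\alpha L+2\alpha t)}\right)r_{\min}(t).$$
   Context: Model (linear decision rule). Directed graph $G=(V,E)$, source $s$, destination $d$, discrete time; pheromone $p_{uv}(t)$, forward flows $f_v(t)$, backward flows $b_v(t)$; leakages $l_v\in[0,1]$; decay $\delta\in(0,1)$; exogenous inputs $f_s(t),b_d(t)$. Edge flows: $f_{uv}(t)=f_u(t)p_{uv}(t)/\sum_{z:(u,z)\in E}p_{uz}(t)$, $b_{uv}(t)=b_v(t)p_{uv}(t)/\sum_{z:(z,v)\in E}p_{zv}(t)$ (at a vertex with a single outgoing, resp. incoming, edge the whole flow goes along it). Updates: $f_v(t+1)=(1-l_v)\sum_{z:(z,v)\in E}f_{zv}(t)$ for $v\neq s$, $b_u(t+1)=(1-l_u)\sum_{z:(u,z)\in E}b_{uz}(t)$ for $u\ne d$, $p_{uv}(t+1)=\delta(p_{uv}(t)+f_{uv}(t)+b_{uv}(t))$.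 Two parallel paths: $G$ is the union of directed paths $P_1,P_2$ from $s$ to $d$ sharing only $s,d$; $s_1,s_2$ are the successors of $s$ and $d_1,d_2$ the predecessors of $d$ on $P_1,P_2$; $m=\mathrm{len}(P_1)$, $n=\mathrm{len}(P_2)$ (numbers of edges), $L=\max(m,n)$. Potential: $r_{ss_1}(t)=p_{ss_1}(t)/p_{ss_2}(t)$, $r_{d_1d}(t)=p_{d_1d}(t)/p_{d_2d}(t)$, and for $t\ge L$, $r_{\min}(t)=\min\{r_{ss_1}(t-i),\,r_{d_1d}(t-i):0\le i\le L-1\}$. *)

(* Defs.v *)
From Stdlib Require Import Reals Lra Lia Arith List.
Open Scope R_scope.

(* Two parallel paths P1 (m edges) and P2 (n edges) from s to d.
   Path k has vertices indexed 0..len_k, vertex 0 = s, vertex len_k = d;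
   edge i (0 <= i < len_k) goes from vertex i to vertex i+1.
   Vertices 1..len_k-1 are the internal vertices of the path.
   State (all functions of time t : nat):
     p1 t i, p2 t j    : pheromone on edge i of P1 / edge j of P2
     f1 t i, f2 t j    : forward flow at internal vertex i of P1 / j of P2
     b1 t i, b2 t j    : backward flow at internal vertex i of P1 / j of P2
     fs t, bd t        : exogenous inputs f_s(t), b_d(t)
     l1 i, l2 j        : leakage at internal vertex i of P1 / j of P2. *)

Section Dyn.
Variables (m n : nat) (fs bd : nat -> R) (p1 p2 f1 f2 b1 b2 : nat -> nat -> R).

(* forward edge flow f_{uv}(t) on edge i of P1: at s the flow splits
   proportionally to pheromone, at an internal vertex all flow goes on. *)
Definition fwd1 (t i : nat) : R :=
  if (i =? 0)%nat then fs t * p1 t 0 / (p1 t 0 + p2 t 0) else f1 t i.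
Definition fwd2 (t j : nat) : R :=
  if (j =? 0)%nat then fs t * p2 t 0 / (p1 t 0 + p2 t 0) else f2 t j.
(* backward edge flow b_{uv}(t) on edge i of P1: at d it splits among the
   two incoming edges, at an internal vertex the whole flow goes back. *)
Definition bwd1 (t i : nat) : R :=
  if (i =? m - 1)%nat then bd t * p1 t (m - 1) / (p1 t (m - 1) + p2 t (n - 1))
  else b1 t (i + 1).
Definition bwd2 (t j : nat) : R :=
  if (j =? n - 1)%nat then bd t * p2 t (n - 1) / (p1 t (m - 1) + p2 t (n - 1))
  else b2 t (j + 1).
End Dyn.

Definition two_path_dynamics (m n : nat) (delta : R) (l1 l2 : nat -> R)
  (fs bd : nat -> R) (p1 p2 f1 f2 b1 b2 : nat -> nat -> R) : Prop :=
  forall t : nat,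
    (forall i, (1 <= i <= m - 1)%nat ->
       f1 (S t) i = (1 - l1 i) * fwd1 fs p1 p2 f1 t (i - 1) /\
       b1 (S t) i = (1 - l1 i) * bwd1 m n bd p1 p2 b1 t i) /\
    (forall j, (1 <= j <= n - 1)%nat ->
       f2 (S t) j = (1 - l2 j) * fwd2 fs p1 p2 f2 t (j - 1) /\
       b2 (S t) j = (1 - l2 j) * bwd2 m n bd p1 p2 b2 t j) /\
    (forall i, (i < m)%nat ->
       p1 (S t) i = delta * (p1 t i + fwd1 fs p1 p2 f1 t i + bwd1 m n bd p1 p2 b1 t i)) /\
    (forall j, (j < n)%nat ->
       p2 (S t) j = delta * (p2 t j + fwd2 fs p1 p2 f2 t j + bwd2 m n bd p1 p2 b2 t j)).

Definition r_ss1 (p1 p2 : nat -> nat -> R) (t : nat) : R := p1 t 0%nat / p2 t 0%nat.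
Definition r_d1d (m n : nat) (p1 p2 : nat -> nat -> R) (t : nat) : R :=
  p1 t (m - 1)%nat / p2 t (n - 1)%nat.

Fixpoint min_upto (g : nat -> R) (k : nat) : R :=
  match k with
  | O => g O
  | S k' => Rmin (g (S k')) (min_upto g k')
  end.

(* r_min(t) = min { r_ss1(t-i), r_d1d(t-i) : 0 <= i <= L-1 }, L = max m n
   (meaningful for t >= L). *)
Definition r_min (m n : nat) (p1 p2 : nat -> nat -> R) (t : nat) : R :=
  min_upto (fun i => Rmin (r_ss1 p1 p2 (t - i)) (r_d1d m n p1 p2 (t - i)))
           (Nat.max m n - 1).

Definition T1_val (m n : nat) (delta : R) (p1 p2 : nat -> nat -> R) (c : R) : R :=
  let g := fun x => ln (x / c) / ln (1 / delta) in
  fold_right Rmax (g (p1 O O))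
    (map (fun i => g (p1 O i)) (seq 0 m) ++ map (fun j => g (p2 O j)) (seq 0 n)).

(* Main.v *)
Require Import Defs.
From Stdlib Require Import Reals Lra Lia Arith List.
Open Scope R_scope.

Lemma core_step (rho al P1 P2 q1 q2 q1' q2' b1 b2 : R) :
  0 < rho -> 0 < al -> 0 < P2 -> rho * P2 <= P1 ->
  0 < q1 -> 0 < q2 -> 0 < q1' -> 0 < q2' ->
  rho * q2 <= q1 -> rho * q2' <= q1' -> 0 <= b2 -> b2 + al <= b1 ->
  rho + rho * al / ((P1 + b1 * q1 / (q1 + q2)) + (P2 + b2 * q2' / (q1' + q2')))
   <= (P1 + b1 * q1 / (q1 + q2)) / (P2 + b2 * q2' / (q1' + q2')).
Proof.
  intros Hr Ha HP2 HP Hq1 Hq2 Hq1' Hq2' Hrq Hrq' Hb2 Hb.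
  set (X1 := b1 * q1 / (q1 + q2)). set (X2 := b2 * q2' / (q1' + q2')).
  assert (E1 : X1 * (q1 + q2) = b1 * q1) by (unfold X1; field; lra).
  assert (E2 : X2 * (q1' + q2') = b2 * q2') by (unfold X2; field; lra).
  assert (h1 : b1 * rho <= X1 * (1 + rho)).
  { assert (H0: 0 <= (X1 * (1 + rho) - b1 * rho) * (q1 + q2)).
    { replace ((X1 * (1 + rho) - b1 * rho) * (q1 + q2)) with (b1 * (q1 - rho * q2))
        by (rewrite Rmult_minus_distr_r; replace (X1 * (1+rho) * (q1+q2)) with (X1 * (q1+q2) * (1+rho)) by ring;
            rewrite E1; ring).
      apply Rmult_le_pos; lra. }
    assert (0 <= X1 * (1 + rho) - b1 * rho).
    { destruct (Rle_or_lt 0 (X1 * (1 + rho) - b1 * rho)) as [h|h]; auto.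
      exfalso. assert (0 < - (X1 * (1 + rho) - b1 * rho) * (q1 + q2)) by (apply Rmult_lt_0_compat; lra). lra. }
    lra. }
  assert (h2 : X2 * (1 + rho) <= b2).
  { assert (H0: 0 <= (b2 - X2 * (1 + rho)) * (q1' + q2')).
    { replace ((b2 - X2 * (1 + rho)) * (q1' + q2')) with (b2 * (q1' - rho * q2'))
        by (rewrite Rmult_minus_distr_r; replace (X2 * (1+rho) * (q1'+q2')) with (X2 * (q1'+q2') * (1+rho)) by ring;
            rewrite E2; ring).
      apply Rmult_le_pos; lra. }
    assert (0 <= b2 - X2 * (1 + rho)).
    { destruct (Rle_or_lt 0 (b2 - X2 * (1 + rho))) as [h|h]; auto.
      exfalso. assert (0 < - (b2 - X2 * (1 + rho)) * (q1' + q2')) by (apply Rmult_lt_0_compat; lra). lra. }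
    lra. }
  assert (HX2 : 0 <= X2).
  { unfold X2. apply Rmult_le_pos. apply Rmult_le_pos; lra. left; apply Rinv_0_lt_compat; lra. }
  assert (h3 : rho * al <= (X1 - rho * X2) * (1 + rho)) by nra.
  set (N := P1 + X1). set (M := P2 + X2).
  assert (HM : 0 < M) by (unfold M; lra).
  assert (HN : rho * M <= N) by (unfold N, M; nra).
  assert (HNM : 0 < N + M) by nra.
  assert (h4 : rho * al * M <= (N - rho * M) * (N + M)).
  { assert (rho * al * M <= (N - rho * M) * (1 + rho) * M).
    { apply Rmult_le_compat_r; [lra|]. unfold N, M. nra. }
    assert ((N - rho * M) * (1 + rho) * M <= (N - rho * M) * (N + M)).
    { rewrite Rmult_assoc. apply Rmult_le_compat_l; lra. }
    lra. }
  apply (Rmult_le_reg_r (M * (N + M))). nra.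
  replace ((rho + rho * al / (N + M)) * (M * (N + M))) with (rho * M * (N+M) + rho * al * M) by (field; lra).
  replace (N / M * (M * (N + M))) with (N * (N+M)) by (field; lra).
  nra.
Qed.

Lemma split_bounds (a p q : R) : 0 <= a -> 0 < p -> 0 < q -> 0 <= a * p / (p + q) <= a.
Proof.
  intros. split.
  - apply Rmult_le_pos. apply Rmult_le_pos; lra. left; apply Rinv_0_lt_compat; lra.
  - apply (Rmult_le_reg_r (p+q)). lra. unfold Rdiv. rewrite Rmult_assoc, Rinv_l by lra. nra.
Qed.

Lemma accum (d : R) (E Sm W : nat -> R) : 0 < d < 1 ->
  (forall u, E (S u) = d * Sm u) -> (forall u, E u <= Sm u <= E u + W u) ->
  (forall u, W u <= W (S u)) -> (forall u, 0 <= W u) ->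
  forall u, Sm u <= d ^ u * E 0%nat + W u / (1 - d).
Proof.
  intros Hd HE HS HW HW0 u. induction u.
  - simpl. destruct (HS 0%nat). specialize (HW0 0%nat).
    assert (W 0%nat <= W 0%nat / (1 - d)).
    { unfold Rdiv. rewrite <- (Rmult_1_r (W 0%nat)) at 1. apply Rmult_le_compat_l; auto.
      rewrite <- Rinv_1. apply Rinv_le_contravar; lra. }
    lra.
  - destruct (HS (S u)). rewrite HE in H0. simpl.
    specialize (HW u). specialize (HW0 u).
    assert (d * (W u / (1 - d)) + W (S u) <= W (S u) / (1 - d)).
    { apply (Rmult_le_reg_r (1 - d)). lra.
      replace ((d * (W u / (1 - d)) + W (S u)) * (1 - d)) with (d * W u + W (S u) * (1 - d)) by (field; lra).
      replace (W (S u) / (1 - d) * (1 - d)) with (W (S u)) by (field; lra). nra. }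
    nra.
Qed.

Lemma min_upto_le (g : nat -> R) k i : (i <= k)%nat -> min_upto g k <= g i.
Proof.
  induction k; intros Hi; simpl.
  - replace i with 0%nat by lia. lra.
  - destruct (Nat.eq_dec i (S k)) as [->|Hne]. apply Rmin_l.
    eapply Rle_trans. apply Rmin_r. apply IHk. lia.
Qed.

Lemma min_upto_ge (g : nat -> R) k rho : (forall i, (i <= k)%nat -> rho <= g i) -> rho <= min_upto g k.
Proof.
  induction k; intros H; simpl. apply H; lia.
  apply Rmin_glb. apply H; lia. apply IHk; intros; apply H; lia.
Qed.

Lemma min_upto_pos (g : nat -> R) k : (forall i, (i <= k)%nat -> 0 < g i) -> 0 < min_upto g k.
Proof.
  induction k; intros H; simpl. apply H; lia.
  apply Rmin_pos. apply H; lia. apply IHk; intros; apply H; lia.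
Qed.

Lemma fold_max_ge (l : list R) d x : In x l -> x <= fold_right Rmax d l.
Proof.
  induction l; simpl; intros H. contradiction.
  destruct H as [->|H]. apply Rmax_l. eapply Rle_trans. apply IHl; auto. apply Rmax_r.
Qed.

Lemma T1_bound (p c d : R) (k : nat) : 0 < p -> 0 < c -> 0 < d < 1 ->
  ln (p / c) / ln (1 / d) <= INR k -> p * d ^ k <= c.
Proof.
  intros Hp Hc Hd H.
  assert (Hl : 0 < ln (1 / d)). { rewrite <- ln_1. apply ln_increasing. lra.
    unfold Rdiv. rewrite Rmult_1_l. rewrite <- Rinv_1. apply Rinv_lt_contravar; lra. }
  assert (H2 : ln (p / c) <= ln ((1/d) ^ k)).
  { rewrite ln_pow. apply (Rmult_le_reg_r (/ ln (1/d))). apply Rinv_0_lt_compat; auto.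
    rewrite Rmult_assoc, Rinv_r by lra. rewrite Rmult_1_r. exact H.
    unfold Rdiv; rewrite Rmult_1_l; apply Rinv_0_lt_compat; lra. }
  assert (H3 : p / c <= (1/d) ^ k).
  { destruct (Rle_or_lt (p/c) ((1/d)^k)) as [h|h]; auto.
    exfalso. apply ln_increasing in h. lra. apply pow_lt. unfold Rdiv; rewrite Rmult_1_l; apply Rinv_0_lt_compat; lra. }
  assert (H4 : (1/d)^k * d^k = 1).
  { rewrite <- Rpow_mult_distr. replace (1/d*d) with 1 by (field; lra). apply pow1. }
  assert (0 < d ^ k) by (apply pow_lt; lra).
  apply (Rmult_le_compat_r (d^k)) in H3; [|lra]. rewrite H4 in H3.
  apply (Rmult_le_reg_r (/c)). apply Rinv_0_lt_compat; lra.
  rewrite Rinv_r by lra. replace (p * d^k * /c) with (p / c * d ^k) by (field; lra). exact H3.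
Qed.

Lemma core_step' (rho al P1 P2 q1 q2 q1' q2' b1 b2 N M : R) :
  0 < rho -> 0 < al -> 0 < P2 -> rho * P2 <= P1 ->
  0 < q1 -> 0 < q2 -> 0 < q1' -> 0 < q2' ->
  rho * q2 <= q1 -> rho * q2' <= q1' -> 0 <= b2 -> b2 + al <= b1 ->
  N = P1 + b1 * q1 / (q1 + q2) -> M = P2 + b2 * q2' / (q1' + q2') ->
  rho + rho * al / (N + M) <= N / M.
Proof. intros; subst; apply core_step; auto. Qed.

Lemma div_cancel (d N M : R) : 0 < d -> M <> 0 -> d * N / (d * M) = N / M.
Proof. intros. field. split; lra. Qed.

Lemma ratio_ge (rho a b : R) : 0 < b -> rho <= a / b -> rho * b <= a.
Proof.
  intros Hb H. apply (Rmult_le_compat_r b) in H; [|lra].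
  replace (a / b * b) with a in H by (field; lra). exact H.
Qed.

Lemma prop_ge (rho a b c A : R) : 0 <= c -> 0 < A -> rho * b <= a ->
  rho * (b + c * b / A) <= a + c * a / A.
Proof.
  intros Hc HA H. replace (b + c * b / A) with (b * (1 + c / A)) by (field; lra).
  replace (a + c * a / A) with (a * (1 + c / A)) by (field; lra).
  rewrite <- Rmult_assoc. apply Rmult_le_compat_r; auto.
  assert (0 <= c / A) by (unfold Rdiv; apply Rmult_le_pos; auto; left; apply Rinv_0_lt_compat; auto). lra.
Qed.


Lemma gain_lemma (rho al S K d : R) : 0 < rho -> 0 < al -> 0 < S -> 0 < K -> 0 < d < 1 ->
  S <= 4 * K / (1 - d) -> rho * (1 + al * (1 - d) / (6 * K)) <= rho + rho * al / S.
Proof.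
  intros Hr Ha HS HK Hd H.
  assert (H1 : al * (1 - d) / (6 * K) <= al / S).
  { apply (Rmult_le_compat_r (1 - d)) in H; [|lra].
    replace (4 * K / (1 - d) * (1 - d)) with (4 * K) in H by (field; lra).
    unfold Rdiv. rewrite Rmult_assoc. apply Rmult_le_compat_l; [lra|].
    apply (Rmult_le_reg_r (6 * K * S)). nra.
    replace ((1 - d) * / (6 * K) * (6 * K * S)) with ((1 - d) * S) by (field; lra).
    replace (/ S * (6 * K * S)) with (6 * K) by (field; lra). nra. }
  replace (rho + rho * al / S) with (rho * (1 + al / S)) by (field; lra).
  apply Rmult_le_compat_l; lra.
Qed.

Theorem mainTheorem15
  (m n : nat) (delta alpha : R) (l1 l2 : nat -> R) (fs bd : nat -> R)
  (p1 p2 f1 f2 b1 b2 : nat -> nat -> R)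
  (Hm : (1 <= m)%nat) (Hmn : (m < n)%nat)
  (Hdelta : 0 < delta < 1)
  (Hdyn : two_path_dynamics m n delta l1 l2 fs bd p1 p2 f1 f2 b1 b2)
  (Hl1 : forall i, (1 <= i <= m - 1)%nat -> l1 i = 0)
  (Hl2 : forall j, (1 <= j <= n - 1)%nat -> l2 j = 0)
  (Hp1 : forall i, (i < m)%nat -> 0 < p1 O i)
  (Hp2 : forall j, (j < n)%nat -> 0 < p2 O j)
  (Halpha : 0 < alpha) (Hfs0 : 0 < fs O) (Hbd0 : 0 < bd O)
  (Hfs : forall t, fs t = fs O + alpha * INR t)
  (Hbd : forall t, bd t = bd O + alpha * INR t)
  (Hf1 : forall i, (1 <= i <= m - 1)%nat -> 0 <= f1 O i <= fs O)
  (Hb1 : forall i, (1 <= i <= m - 1)%nat -> 0 <= b1 O i <= bd O)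
  (Hf2 : forall j, (1 <= j <= n - 1)%nat -> 0 <= f2 O j <= fs O)
  (Hb2 : forall j, (1 <= j <= n - 1)%nat -> 0 <= b2 O j <= bd O) :
  forall t : nat,
    INR t >= INR (Nat.max m n) + Rmax 0 (T1_val m n delta p1 p2 (fs O + bd O)) ->
    r_min m n p1 p2 (t + Nat.max m n) >=
      (1 + alpha * (1 - delta) /
             (6 * (fs O + bd O + 2 * alpha * INR (Nat.max m n) + 2 * alpha * INR t)))
      * r_min m n p1 p2 t.
Proof.
  intros t Ht.
  assert (HL : Nat.max m n = n) by (apply Nat.max_r; lia).
  rewrite HL in Ht |- *.
  assert (Hfsu : forall u, 0 < fs u).
  { intro u. rewrite Hfs. pose proof (pos_INR u). assert (0 <= alpha * INR u) by (apply Rmult_le_pos; lra). lra. }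
  assert (Hbdu : forall u, 0 < bd u).
  { intro u. rewrite Hbd. pose proof (pos_INR u). assert (0 <= alpha * INR u) by (apply Rmult_le_pos; lra). lra. }
  assert (Hfsm : forall u, fs u <= fs (S u)).
  { intro u. rewrite (Hfs (S u)), (Hfs u), S_INR. lra. }
  assert (Hbdm : forall u, bd u <= bd (S u)).
  { intro u. rewrite (Hbd (S u)), (Hbd u), S_INR. lra. }
  assert (DF1 : forall u i, (1<=i<=m-1)%nat -> f1 (S u) i = fwd1 fs p1 p2 f1 u (i-1)).
  { intros u i Hi. destruct (Hdyn u) as [H _]. rewrite (proj1 (H i Hi)), Hl1 by auto. ring. }
  assert (DB1 : forall u i, (1<=i<=m-1)%nat -> b1 (S u) i = bwd1 m n bd p1 p2 b1 u i).
  { intros u i Hi. destruct (Hdyn u) as [H _]. rewrite (proj2 (H i Hi)), Hl1 by auto. ring. }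
  assert (DF2 : forall u i, (1<=i<=n-1)%nat -> f2 (S u) i = fwd2 fs p1 p2 f2 u (i-1)).
  { intros u i Hi. destruct (Hdyn u) as [_ [H _]]. rewrite (proj1 (H i Hi)), Hl2 by auto. ring. }
  assert (DB2 : forall u i, (1<=i<=n-1)%nat -> b2 (S u) i = bwd2 m n bd p1 p2 b2 u i).
  { intros u i Hi. destruct (Hdyn u) as [_ [H _]]. rewrite (proj2 (H i Hi)), Hl2 by auto. ring. }
  assert (DP1 : forall u i, (i<m)%nat -> p1 (S u) i =
     delta * (p1 u i + fwd1 fs p1 p2 f1 u i + bwd1 m n bd p1 p2 b1 u i)).
  { intros u i Hi. destruct (Hdyn u) as [_ [_ [H _]]]. auto. }
  assert (DP2 : forall u i, (i<n)%nat -> p2 (S u) i =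
     delta * (p2 u i + fwd2 fs p1 p2 f2 u i + bwd2 m n bd p1 p2 b2 u i)).
  { intros u i Hi. destruct (Hdyn u) as [_ [_ [_ H]]]. auto. }
  assert (Inv : forall u,
    (forall i, (i<m)%nat -> 0 < p1 u i) /\ (forall j, (j<n)%nat -> 0 < p2 u j) /\
    (forall i, (1<=i<=m-1)%nat -> (0 <= f1 u i <= fs u /\ 0 <= b1 u i <= bd u)) /\
    (forall j, (1<=j<=n-1)%nat -> (0 <= f2 u j <= fs u /\ 0 <= b2 u j <= bd u))).
  { induction u.
    - split; [exact Hp1|]. split; [exact Hp2|]. split.
      + intros i Hi. split; [apply Hf1|apply Hb1]; auto.
      + intros i Hi. split; [apply Hf2|apply Hb2]; auto.
    - destruct IHu as [I1 [I2 [I3 I4]]].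
      assert (A1 : forall i, (i<m)%nat -> 0 <= fwd1 fs p1 p2 f1 u i <= fs u).
      { intros i Hi. unfold fwd1. destruct (Nat.eqb_spec i 0) as [->|Hne].
        apply split_bounds; [left; auto| apply I1; lia| apply I2; lia].
        apply I3; lia. }
      assert (A2 : forall i, (i<n)%nat -> 0 <= fwd2 fs p1 p2 f2 u i <= fs u).
      { intros i Hi. unfold fwd2. destruct (Nat.eqb_spec i 0) as [->|Hne].
        replace (fs u * p2 u 0%nat / (p1 u 0%nat + p2 u 0%nat)) with (fs u * p2 u 0%nat / (p2 u 0%nat + p1 u 0%nat)) by (rewrite Rplus_comm; auto).
        apply split_bounds; [left; auto| apply I2; lia| apply I1; lia].
        apply I4; lia. }
      assert (B1 : forall i, (i<m)%nat -> 0 <= bwd1 m n bd p1 p2 b1 u i <= bd u).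
      { intros i Hi. unfold bwd1. destruct (Nat.eqb_spec i (m-1)) as [->|Hne].
        apply split_bounds; [left; auto| apply I1; lia| apply I2; lia].
        apply I3; lia. }
      assert (B2 : forall i, (i<n)%nat -> 0 <= bwd2 m n bd p1 p2 b2 u i <= bd u).
      { intros i Hi. unfold bwd2. destruct (Nat.eqb_spec i (n-1)) as [->|Hne].
        replace (bd u * p2 u (n-1)%nat / (p1 u (m-1)%nat + p2 u (n-1)%nat)) with (bd u * p2 u (n-1)%nat / (p2 u (n-1)%nat + p1 u (m-1)%nat)) by (rewrite Rplus_comm; auto).
        apply split_bounds; [left; auto| apply I2; lia| apply I1; lia].
        apply I4; lia. }
      split; [|split; [|split]].
      + intros i Hi. rewrite DP1 by auto. specialize (I1 i Hi). specialize (A1 i Hi). specialize (B1 i Hi).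
        apply Rmult_lt_0_compat; lra.
      + intros i Hi. rewrite DP2 by auto. specialize (I2 i Hi). specialize (A2 i Hi). specialize (B2 i Hi).
        apply Rmult_lt_0_compat; lra.
      + intros i Hi. split; split.
        * rewrite DF1 by auto. apply A1; lia.
        * rewrite DF1 by auto. specialize (A1 (i-1)%nat ltac:(lia)). specialize (Hfsm u). lra.
        * rewrite DB1 by auto. apply B1; lia.
        * rewrite DB1 by auto. specialize (B1 i ltac:(lia)). specialize (Hbdm u). lra.
      + intros i Hi. split; split.
        * rewrite DF2 by auto. apply A2; lia.
        * rewrite DF2 by auto. specialize (A2 (i-1)%nat ltac:(lia)). specialize (Hfsm u). lra.
        * rewrite DB2 by auto. apply B2; lia.
        * rewrite DB2 by auto. specialize (B2 i ltac:(lia)). specialize (Hbdm u). lra. }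
  assert (P1pos : forall u i, (i<m)%nat -> 0 < p1 u i) by (intros u; apply (Inv u)).
  assert (P2pos : forall u i, (i<n)%nat -> 0 < p2 u i) by (intros u; apply (Inv u)).
  assert (A1 : forall u i, (i<m)%nat -> 0 <= fwd1 fs p1 p2 f1 u i <= fs u).
  { intros u i Hi. destruct (Inv u) as [I1 [I2 [I3 I4]]]. unfold fwd1. destruct (Nat.eqb_spec i 0) as [->|Hne].
    apply split_bounds; [left; auto| apply I1; lia| apply I2; lia].
    apply I3; lia. }
  assert (A2 : forall u i, (i<n)%nat -> 0 <= fwd2 fs p1 p2 f2 u i <= fs u).
  { intros u i Hi. destruct (Inv u) as [I1 [I2 [I3 I4]]]. unfold fwd2. destruct (Nat.eqb_spec i 0) as [->|Hne].
    replace (fs u * p2 u 0%nat / (p1 u 0%nat + p2 u 0%nat)) with (fs u * p2 u 0%nat / (p2 u 0%nat + p1 u 0%nat)) by (rewrite Rplus_comm; auto).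
    apply split_bounds; [left; auto| apply I2; lia| apply I1; lia].
    apply I4; lia. }
  assert (B1 : forall u i, (i<m)%nat -> 0 <= bwd1 m n bd p1 p2 b1 u i <= bd u).
  { intros u i Hi. destruct (Inv u) as [I1 [I2 [I3 I4]]]. unfold bwd1. destruct (Nat.eqb_spec i (m-1)) as [->|Hne].
    apply split_bounds; [left; auto| apply I1; lia| apply I2; lia].
    apply I3; lia. }
  assert (B2 : forall u i, (i<n)%nat -> 0 <= bwd2 m n bd p1 p2 b2 u i <= bd u).
  { intros u i Hi. destruct (Inv u) as [I1 [I2 [I3 I4]]]. unfold bwd2. destruct (Nat.eqb_spec i (n-1)) as [->|Hne].
    replace (bd u * p2 u (n-1)%nat / (p1 u (m-1)%nat + p2 u (n-1)%nat)) with (bd u * p2 u (n-1)%nat / (p2 u (n-1)%nat + p1 u (m-1)%nat)) by (rewrite Rplus_comm; auto).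
    apply split_bounds; [left; auto| apply I2; lia| apply I1; lia].
    apply I4; lia. }
  assert (Df1 : forall k u, (k <= m-1)%nat -> fwd1 fs p1 p2 f1 (u+k) k = fwd1 fs p1 p2 f1 u 0).
  { induction k; intros u Hk. rewrite Nat.add_0_r; auto.
    unfold fwd1 at 1. simpl (S k =? 0)%nat. cbv iota.
    replace (u + S k)%nat with (S (u + k)) by lia. rewrite DF1 by lia.
    replace (S k - 1)%nat with k by lia. apply IHk; lia. }
  assert (Df2 : forall k u, (k <= n-1)%nat -> fwd2 fs p1 p2 f2 (u+k) k = fwd2 fs p1 p2 f2 u 0).
  { induction k; intros u Hk. rewrite Nat.add_0_r; auto.
    unfold fwd2 at 1. simpl (S k =? 0)%nat. cbv iota.
    replace (u + S k)%nat with (S (u + k)) by lia. rewrite DF2 by lia.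
    replace (S k - 1)%nat with k by lia. apply IHk; lia. }
  assert (Db1 : forall k u, (k <= m-1)%nat -> bwd1 m n bd p1 p2 b1 (u+k) (m-1-k) = bwd1 m n bd p1 p2 b1 u (m-1)).
  { induction k; intros u Hk. rewrite Nat.add_0_r, Nat.sub_0_r; auto.
    unfold bwd1 at 1. destruct (Nat.eqb_spec (m-1-S k) (m-1)) as [h|h]; [lia|].
    replace (u + S k)%nat with (S (u + k)) by lia. replace (m-1-S k+1)%nat with (m-1-k)%nat by lia.
    rewrite DB1 by lia. apply IHk; lia. }
  assert (Db2 : forall k u, (k <= n-1)%nat -> bwd2 m n bd p1 p2 b2 (u+k) (n-1-k) = bwd2 m n bd p1 p2 b2 u (n-1)).
  { induction k; intros u Hk. rewrite Nat.add_0_r, Nat.sub_0_r; auto.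
    unfold bwd2 at 1. destruct (Nat.eqb_spec (n-1-S k) (n-1)) as [h|h]; [lia|].
    replace (u + S k)%nat with (S (u + k)) by lia. replace (n-1-S k+1)%nat with (n-1-k)%nat by lia.
    rewrite DB2 by lia. apply IHk; lia. }
  assert (Ebwd1 : forall u, (m-1 <= u)%nat -> bwd1 m n bd p1 p2 b1 u 0 =
     bd (u-(m-1))%nat * p1 (u-(m-1))%nat (m-1)%nat / (p1 (u-(m-1))%nat (m-1)%nat + p2 (u-(m-1))%nat (n-1)%nat)).
  { intros u Hu. pose proof (Db1 (m-1)%nat (u-(m-1))%nat (le_n _)) as E.
    replace (u-(m-1)+(m-1))%nat with u in E by lia. rewrite Nat.sub_diag in E. rewrite E.
    unfold bwd1. rewrite Nat.eqb_refl. reflexivity. }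
  assert (Ebwd2 : forall u, (n-1 <= u)%nat -> bwd2 m n bd p1 p2 b2 u 0 =
     bd (u-(n-1))%nat * p2 (u-(n-1))%nat (n-1)%nat / (p1 (u-(n-1))%nat (m-1)%nat + p2 (u-(n-1))%nat (n-1)%nat)).
  { intros u Hu. pose proof (Db2 (n-1)%nat (u-(n-1))%nat (le_n _)) as E.
    replace (u-(n-1)+(n-1))%nat with u in E by lia. rewrite Nat.sub_diag in E. rewrite E.
    unfold bwd2. rewrite Nat.eqb_refl. reflexivity. }
  assert (Efwd1 : forall u, (m-1 <= u)%nat -> fwd1 fs p1 p2 f1 u (m-1) =
     fs (u-(m-1))%nat * p1 (u-(m-1))%nat 0%nat / (p1 (u-(m-1))%nat 0%nat + p2 (u-(m-1))%nat 0%nat)).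
  { intros u Hu. pose proof (Df1 (m-1)%nat (u-(m-1))%nat (le_n _)) as E.
    replace (u-(m-1)+(m-1))%nat with u in E by lia. rewrite E. reflexivity. }
  assert (Efwd2 : forall u, (n-1 <= u)%nat -> fwd2 fs p1 p2 f2 u (n-1) =
     fs (u-(n-1))%nat * p2 (u-(n-1))%nat 0%nat / (p1 (u-(n-1))%nat 0%nat + p2 (u-(n-1))%nat 0%nat)).
  { intros u Hu. pose proof (Df2 (n-1)%nat (u-(n-1))%nat (le_n _)) as E.
    replace (u-(n-1)+(n-1))%nat with u in E by lia. rewrite E. reflexivity. }
  assert (Gap : forall u, (n-1 <= u)%nat -> forall g : nat -> R, (forall w, g w = g O + alpha * INR w) ->
      g (u-(n-1))%nat + alpha <= g (u-(m-1))%nat).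
  { intros u Hu g Hg. rewrite (Hg (u-(m-1))%nat), (Hg (u-(n-1))%nat).
    replace (u-(m-1))%nat with ((u-(n-1)) + (n-m))%nat by lia. rewrite plus_INR.
    assert (1 <= INR (n-m)) by (apply (le_INR 1); lia).
    assert (alpha * 1 <= alpha * INR (n-m)) by (apply Rmult_le_compat_l; lra). rewrite Rmult_plus_distr_l. lra. }
  pose (Sss := fun u => p1 u 0%nat + fwd1 fs p1 p2 f1 u 0%nat + bwd1 m n bd p1 p2 b1 u 0%nat
                 + (p2 u 0%nat + fwd2 fs p1 p2 f2 u 0%nat + bwd2 m n bd p1 p2 b2 u 0%nat)).
  pose (Sdd := fun u => p1 u (m-1)%nat + fwd1 fs p1 p2 f1 u (m-1)%nat + bwd1 m n bd p1 p2 b1 u (m-1)%nat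
                 + (p2 u (n-1)%nat + fwd2 fs p1 p2 f2 u (n-1)%nat + bwd2 m n bd p1 p2 b2 u (n-1)%nat)).
  assert (StepS : forall u rho, (n-1 <= u)%nat -> 0 < rho -> rho <= r_ss1 p1 p2 u ->
     rho <= r_d1d m n p1 p2 (u-(m-1)) -> rho <= r_d1d m n p1 p2 (u-(n-1)) ->
     rho + rho * alpha / Sss u <= r_ss1 p1 p2 (S u)).
  { intros u rho Hu Hr R0 R1 R2. unfold r_ss1, r_d1d in *.
    assert (Hm1 : (m-1 < m)%nat) by lia. assert (Hn1 : (n-1 < n)%nat) by lia.
    assert (H0m : (0 < m)%nat) by lia. assert (H0n : (0 < n)%nat) by lia.
    rewrite DP1, DP2 by lia. 
    pose proof (A2 u 0%nat H0n). pose proof (B2 u 0%nat H0n). pose proof (P2pos u 0%nat H0n).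
    rewrite div_cancel by lra.
    apply (core_step' rho alpha (p1 u 0%nat + fwd1 fs p1 p2 f1 u 0%nat) (p2 u 0%nat + fwd2 fs p1 p2 f2 u 0%nat)
       (p1 (u-(m-1))%nat (m-1)%nat) (p2 (u-(m-1))%nat (n-1)%nat)
       (p1 (u-(n-1))%nat (m-1)%nat) (p2 (u-(n-1))%nat (n-1)%nat)
       (bd (u-(m-1))%nat) (bd (u-(n-1))%nat)).
    - exact Hr.
    - exact Halpha.
    - lra.
    - unfold fwd1, fwd2. simpl (0 =? 0)%nat. cbv iota.
      apply prop_ge. left; auto. pose proof (P1pos u 0%nat H0m). lra.
      apply ratio_ge; [apply P2pos; lia | auto].
    - apply P1pos; lia.
    - apply P2pos; lia.
    - apply P1pos; lia.
    - apply P2pos; lia.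
    - apply ratio_ge; [apply P2pos; lia | auto].
    - apply ratio_ge; [apply P2pos; lia | auto].
    - left; auto.
    - apply Gap; auto.
    - rewrite Ebwd1 by lia. reflexivity.
    - rewrite Ebwd2 by lia. reflexivity. }
  assert (StepD : forall u rho, (n-1 <= u)%nat -> 0 < rho -> rho <= r_d1d m n p1 p2 u ->
     rho <= r_ss1 p1 p2 (u-(m-1)) -> rho <= r_ss1 p1 p2 (u-(n-1)) ->
     rho + rho * alpha / Sdd u <= r_d1d m n p1 p2 (S u)).
  { intros u rho Hu Hr R0 R1 R2. unfold r_ss1, r_d1d in *.
    assert (Hm1 : (m-1 < m)%nat) by lia. assert (Hn1 : (n-1 < n)%nat) by lia.
    assert (H0m : (0 < m)%nat) by lia. assert (H0n : (0 < n)%nat) by lia.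
    rewrite DP1, DP2 by lia. 
    pose proof (A2 u (n-1)%nat Hn1). pose proof (B2 u (n-1)%nat Hn1). pose proof (P2pos u (n-1)%nat Hn1).
    rewrite div_cancel by lra.
    apply (core_step' rho alpha (p1 u (m-1)%nat + bwd1 m n bd p1 p2 b1 u (m-1)%nat) (p2 u (n-1)%nat + bwd2 m n bd p1 p2 b2 u (n-1)%nat)
       (p1 (u-(m-1))%nat 0%nat) (p2 (u-(m-1))%nat 0%nat)
       (p1 (u-(n-1))%nat 0%nat) (p2 (u-(n-1))%nat 0%nat)
       (fs (u-(m-1))%nat) (fs (u-(n-1))%nat)).
    - exact Hr.
    - exact Halpha.
    - lra.
    - unfold bwd1, bwd2. rewrite !Nat.eqb_refl.
      apply prop_ge. left; auto. pose proof (P1pos u (m-1)%nat Hm1). lra.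
      apply ratio_ge; [apply P2pos; lia | auto].
    - apply P1pos; lia.
    - apply P2pos; lia.
    - apply P1pos; lia.
    - apply P2pos; lia.
    - apply ratio_ge; [apply P2pos; lia | auto].
    - apply ratio_ge; [apply P2pos; lia | auto].
    - left; auto.
    - apply Gap; auto.
    - rewrite Efwd1 by lia. ring.
    - rewrite Efwd2 by lia. ring. }
  set (c := fs O + bd O) in *.
  assert (Htn : (n <= t)%nat).
  { apply INR_le. pose proof (Rmax_l 0 (T1_val m n delta p1 p2 c)). lra. }
  assert (HT1 : forall x, ln (x / c) / ln (1 / delta) <= INR (t - n) ->
                   0 < x -> forall u, (t - n <= u)%nat -> delta ^ u * x <= c).
  { intros x Hx Hx0 u Hu. pose proof (T1_bound x c delta (t-n) Hx0 ltac:(unfold c; lra) Hdelta Hx).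
    replace u with ((u - (t-n)) + (t-n))%nat by lia. rewrite pow_add.
    assert (0 < delta ^ (t-n)) by (apply pow_lt; lra).
    assert (delta ^ (u - (t-n)) <= 1) by (rewrite <- (pow1 (u - (t-n))); apply pow_incr; lra).
    assert (0 <= delta ^ (u - (t-n))) by (apply pow_le; lra).
    replace (delta ^ (u - (t - n)) * delta ^ (t - n) * x) with (delta ^ (u - (t - n)) * (x * delta ^ (t - n))) by ring.
    assert (delta ^ (u - (t - n)) * (x * delta ^ (t - n)) <= 1 * c).
    { apply Rmult_le_compat; auto. left. apply Rmult_lt_0_compat; auto. }
    lra. }
  assert (HT1v : INR (t - n) >= T1_val m n delta p1 p2 c).
  { rewrite minus_INR by auto. pose proof (Rmax_r 0 (T1_val m n delta p1 p2 c)). lra. }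
  assert (Tin1 : forall i, (i < m)%nat -> ln (p1 O i / c) / ln (1 / delta) <= T1_val m n delta p1 p2 c).
  { intros i Hi. unfold T1_val. apply fold_max_ge. apply in_or_app. left.
    apply in_map_iff. exists i. split; auto. apply in_seq. lia. }
  assert (Tin2 : forall i, (i < n)%nat -> ln (p2 O i / c) / ln (1 / delta) <= T1_val m n delta p1 p2 c).
  { intros i Hi. unfold T1_val. apply fold_max_ge. apply in_or_app. right.
    apply in_map_iff. exists i. split; auto. apply in_seq. lia. }
  set (K := c + 2 * alpha * INR n + 2 * alpha * INR t).
  assert (HK : 0 < K).
  { unfold K, c. pose proof (pos_INR n). pose proof (pos_INR t).
    assert (0 <= alpha * INR n) by (apply Rmult_le_pos; lra).
    assert (0 <= alpha * INR t) by (apply Rmult_le_pos; lra). lra. }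
  assert (Wb : forall u, (u <= t + n)%nat -> fs u + bd u <= K).
  { intros u Hu. rewrite Hfs, Hbd. unfold K, c.
    apply le_INR in Hu. rewrite plus_INR in Hu.
    assert (alpha * INR u <= alpha * (INR t + INR n)) by (apply Rmult_le_compat_l; lra).
    lra. }
  assert (Hm1 : (m-1 < m)%nat) by lia. assert (Hn1 : (n-1 < n)%nat) by lia.
  assert (H0m : (0 < m)%nat) by lia. assert (H0n : (0 < n)%nat) by lia.
  assert (BS : forall u, (t <= u <= t + n - 1)%nat -> 0 < Sss u /\ Sss u <= 4 * K / (1 - delta)).
  { intros u Hu.
    assert (Acc := accum delta (fun u => p1 u 0%nat + p2 u 0%nat) Sss (fun u => 2 * (fs u + bd u)) Hdelta).
    assert (Bnd : forall w, p1 w 0%nat + p2 w 0%nat <= Sss w <= p1 w 0%nat + p2 w 0%nat + 2 * (fs w + bd w)).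
    { intro w. unfold Sss. pose proof (A1 w 0%nat H0m). pose proof (A2 w 0%nat H0n).
      pose proof (B1 w 0%nat H0m). pose proof (B2 w 0%nat H0n). lra. }
    specialize (Acc ltac:(intro w; cbv beta; rewrite DP1, DP2 by lia; unfold Sss; ring) Bnd
      ltac:(intro w; cbv beta; specialize (Hfsm w); specialize (Hbdm w); lra)
      ltac:(intro w; cbv beta; specialize (Hfsu w); specialize (Hbdu w); lra) u).
    simpl in Acc.
    pose proof (HT1 (p1 O 0%nat) ltac:(specialize (Tin1 0%nat H0m); lra) (Hp1 0%nat H0m) u ltac:(lia)).
    pose proof (HT1 (p2 O 0%nat) ltac:(specialize (Tin2 0%nat H0n); lra) (Hp2 0%nat H0n) u ltac:(lia)).
    pose proof (Wb u ltac:(lia)).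
    assert (2 * (fs u + bd u) / (1 - delta) <= 2 * K / (1 - delta)).
    { unfold Rdiv. apply Rmult_le_compat_r. left; apply Rinv_0_lt_compat; lra. lra. }
    assert (2 * c <= 2 * K / (1 - delta)).
    { apply (Rmult_le_reg_r (1 - delta)). lra.
      replace (2 * K / (1 - delta) * (1 - delta)) with (2 * K) by (field; lra).
      assert (c <= K).
      { unfold K. pose proof (pos_INR n). pose proof (pos_INR t).
        assert (0 <= alpha * INR n) by (apply Rmult_le_pos; lra).
        assert (0 <= alpha * INR t) by (apply Rmult_le_pos; lra). lra. }
      assert (0 <= c * delta) by (apply Rmult_le_pos; unfold c; lra). lra. }
    split.
    - pose proof (P1pos u 0%nat H0m). pose proof (P2pos u 0%nat H0n). destruct (Bnd u). lra.
    - replace (4 * K / (1 - delta)) with (2 * K / (1 - delta) + 2 * K / (1 - delta)) by (field; lra).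
      rewrite Rmult_plus_distr_l in Acc. lra. }
  assert (BD : forall u, (t <= u <= t + n - 1)%nat -> 0 < Sdd u /\ Sdd u <= 4 * K / (1 - delta)).
  { intros u Hu.
    assert (Acc := accum delta (fun u => p1 u (m-1)%nat + p2 u (n-1)%nat) Sdd (fun u => 2 * (fs u + bd u)) Hdelta).
    assert (Bnd : forall w, p1 w (m-1)%nat + p2 w (n-1)%nat <= Sdd w <= p1 w (m-1)%nat + p2 w (n-1)%nat + 2 * (fs w + bd w)).
    { intro w. unfold Sdd. pose proof (A1 w (m-1)%nat Hm1). pose proof (A2 w (n-1)%nat Hn1).
      pose proof (B1 w (m-1)%nat Hm1). pose proof (B2 w (n-1)%nat Hn1). lra. }
    specialize (Acc ltac:(intro w; cbv beta; rewrite DP1, DP2 by lia; unfold Sdd; ring) Bnd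
      ltac:(intro w; cbv beta; specialize (Hfsm w); specialize (Hbdm w); lra)
      ltac:(intro w; cbv beta; specialize (Hfsu w); specialize (Hbdu w); lra) u).
    simpl in Acc.
    pose proof (HT1 (p1 O (m-1)%nat) ltac:(specialize (Tin1 (m-1)%nat Hm1); lra) (Hp1 (m-1)%nat Hm1) u ltac:(lia)).
    pose proof (HT1 (p2 O (n-1)%nat) ltac:(specialize (Tin2 (n-1)%nat Hn1); lra) (Hp2 (n-1)%nat Hn1) u ltac:(lia)).
    pose proof (Wb u ltac:(lia)).
    assert (2 * (fs u + bd u) / (1 - delta) <= 2 * K / (1 - delta)).
    { unfold Rdiv. apply Rmult_le_compat_r. left; apply Rinv_0_lt_compat; lra. lra. }
    assert (2 * c <= 2 * K / (1 - delta)).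
    { apply (Rmult_le_reg_r (1 - delta)). lra.
      replace (2 * K / (1 - delta) * (1 - delta)) with (2 * K) by (field; lra).
      assert (c <= K).
      { unfold K. pose proof (pos_INR n). pose proof (pos_INR t).
        assert (0 <= alpha * INR n) by (apply Rmult_le_pos; lra).
        assert (0 <= alpha * INR t) by (apply Rmult_le_pos; lra). lra. }
      assert (0 <= c * delta) by (apply Rmult_le_pos; unfold c; lra). lra. }
    split.
    - pose proof (P1pos u (m-1)%nat Hm1). pose proof (P2pos u (n-1)%nat Hn1). destruct (Bnd u). lra.
    - replace (4 * K / (1 - delta)) with (2 * K / (1 - delta) + 2 * K / (1 - delta)) by (field; lra).
      rewrite Rmult_plus_distr_l in Acc. lra. }
  set (kap := alpha * (1 - delta) / (6 * K)).
  assert (Hkap : 0 <= kap).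
  { unfold kap. unfold Rdiv. apply Rmult_le_pos. apply Rmult_le_pos; lra. left; apply Rinv_0_lt_compat; lra. }
  assert (RS : forall w, 0 < r_ss1 p1 p2 w).
  { intro w. unfold r_ss1. apply Rdiv_lt_0_compat; auto. }
  assert (RD : forall w, 0 < r_d1d m n p1 p2 w).
  { intro w. unfold r_d1d. apply Rdiv_lt_0_compat; auto. }
  assert (RM : forall w, r_min m n p1 p2 w =
     min_upto (fun i => Rmin (r_ss1 p1 p2 (w - i)) (r_d1d m n p1 p2 (w - i))) (n - 1)).
  { intro w. unfold r_min. rewrite HL. reflexivity. }
  assert (RMpos : forall w, 0 < r_min m n p1 p2 w).
  { intro w. rewrite RM. apply min_upto_pos. intros. apply Rmin_pos; auto. }
  assert (RMle : forall w i, (i <= n-1)%nat -> r_min m n p1 p2 w <= r_ss1 p1 p2 (w - i) /\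
                                              r_min m n p1 p2 w <= r_d1d m n p1 p2 (w - i)).
  { intros w i Hi. rewrite RM. pose proof (min_upto_le (fun i => Rmin (r_ss1 p1 p2 (w - i)) (r_d1d m n p1 p2 (w - i))) (n-1) i Hi).
    simpl in H. split; eapply Rle_trans; eauto. apply Rmin_l. apply Rmin_r. }
  assert (Key : forall u, (t <= u <= t + n - 1)%nat ->
     r_min m n p1 p2 u * (1 + kap) <= r_ss1 p1 p2 (S u) /\ r_min m n p1 p2 u * (1 + kap) <= r_d1d m n p1 p2 (S u)).
  { intros u Hu. set (rho := r_min m n p1 p2 u). assert (Hr : 0 < rho) by apply RMpos.
    destruct (RMle u 0%nat ltac:(lia)) as [a0 b0]. rewrite Nat.sub_0_r in a0, b0.
    destruct (RMle u (m-1)%nat ltac:(lia)) as [a1 b1'].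
    destruct (RMle u (n-1)%nat ltac:(lia)) as [a2 b2'].
    split.
    - eapply Rle_trans; [| apply (StepS u rho); auto; lia].
      apply gain_lemma; auto; apply BS; auto.
    - eapply Rle_trans; [| apply (StepD u rho); auto; lia].
      apply gain_lemma; auto; apply BD; auto. }
  assert (Mono : forall u, (t <= u <= t + n - 1)%nat -> r_min m n p1 p2 u <= r_min m n p1 p2 (S u)).
  { intros u Hu. rewrite (RM (S u)). apply min_upto_ge. intros i Hi.
    pose proof (RMpos u). destruct (Key u Hu) as [k1 k2].
    destruct i as [|i].
    - rewrite Nat.sub_0_r. assert (0 <= r_min m n p1 p2 u * kap) by (apply Rmult_le_pos; lra).
      apply Rmin_glb; lra.
    - replace (S u - S i)%nat with (u - i)%nat by lia.
      destruct (RMle u i ltac:(lia)). apply Rmin_glb; auto. }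
  assert (Mono2 : forall d, (d <= n - 1)%nat -> r_min m n p1 p2 t <= r_min m n p1 p2 (t + d)).
  { induction d; intros Hd. rewrite Nat.add_0_r; lra.
    eapply Rle_trans. apply IHd; lia. replace (t + S d)%nat with (S (t + d)) by lia. apply Mono. lia. }
  apply Rle_ge. rewrite (RM (t + n)%nat). apply min_upto_ge. intros i Hi.
  replace (t + n - i)%nat with (S (t + n - 1 - i)) by lia.
  destruct (Key (t + n - 1 - i)%nat ltac:(lia)) as [k1 k2].
  pose proof (Mono2 (n - 1 - i)%nat ltac:(lia)). replace (t + (n - 1 - i))%nat with (t + n - 1 - i)%nat in H by lia.
  pose proof (RMpos t).
  assert (r_min m n p1 p2 t * (1 + kap) <= r_min m n p1 p2 (t + n - 1 - i)%nat * (1 + kap))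
    by (apply Rmult_le_compat_r; lra).
  apply Rmin_glb; lra.
Qed.
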